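(* For any integers $x,y\ge 3$ and integers $a\le x/2$, $b\le y/2$, except for the case $x=y=4$, $a=b=2$, we have \[\binom{x}{a}\binom{y}{b}\le\binom{x+y-1}{a+b}.\] *)

(* Defs.v *)
From mathcomp Require Import all_boot.

(* Main.v *)
Require Import Defs.
From mathcomp Require Import all_boot.
From mathcomp Require Import zify.

Lemma three k l c r :
  'C(k,c)*'C(l,r.+2) + 'C(k,c.+1)*'C(l,r.+1) + 'C(k,c.+2)*'C(l,r) <= 'C(k+l, c+r+2).
Proof.
rewrite -Vandermonde -(big_mkord xpredT (fun j => 'C(k, j) * 'C(l, c + r + 2 - j))).
rewrite (big_cat_nat _ (n:=c)) //=; last by lia.
rewrite (big_cat_nat _ (m:=c) (n:=c.+3)) //=; last by lia.
apply: (leq_trans _ (leq_addl _ _)); apply: (leq_trans _ (leq_addr _ _)).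
rewrite !big_nat_recl //; try lia.
have -> : \sum_(c <= i < c) 'C(k, i.+3) * 'C(l, c + r + 2 - i.+3) = 0 by rewrite big_geq.
have e1 : c + r + 2 - c = r.+2 by lia.
have e2 : c + r + 2 - c.+1 = r.+1 by lia.
have e3 : c + r + 2 - c.+2 = r by lia.
by rewrite e1 e2 e3 addn0 !addnA.
lia. Qed.

Lemma binle y b : b.*2 < y -> 'C(y,b) <= 'C(y,b.+1).
Proof.
move=> h; have e := mul_bin_left y b.
rewrite -(leq_pmul2l (ltn0Sn b)) e leq_mul2r; apply/orP; right; lia.
Qed.

Lemma lemA x a y b : 0 < a -> 0 < b -> a.*2 <= x -> b.*2 < y ->
  'C(x,a)*'C(y,b) <= 'C(x+y-1,a+b).
Proof.
case: x => [|x]; first by case: a.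
case: a => [|a] // _; case: b => [|b] // _ ha hb.
have -> : x.+1 + y - 1 = x + y by lia.
have -> : a.+1 + b.+1 = a + b + 2 by lia.
have := three x y a b.
rewrite binS mulnDl.
have := @binle _ _ hb.
move=> h1 h2; apply: leq_trans h2.
have h3 : 'C(x,a)*'C(y,b.+1) <= 'C(x,a)*'C(y,b.+2) by rewrite leq_mul2l h1 orbT.
lia.
Qed.

Lemma lemB a b : 1 < a -> 1 < b -> ~ (a = 2 /\ b = 2) ->
  'C(a.*2,a)*'C(b.*2,b) <= 'C(a.*2+b.*2-1,a+b).
Proof.
case: a => [|a] //; case: b => [|b] // ha hb hn.
have -> : a.+1.*2 + b.+1.*2 - 1 = (a.*2.+1) + b.+1.*2 by lia.
have -> : a.+1 + b.+1 = a + b + 2 by lia.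
have h := three (a.*2.+1) (b.+1.*2) a b.
set P := 'C(a.*2.+1, a).
have hC : 'C(a.+1.*2, a.+1) = 'C(a.*2.+1, a.+1) + P by rewrite binS.
have eP : 'C(a.*2.+1, a.+1) = P.
  have := mul_bin_left (a.*2.+1) a. rewrite -/P.
  have -> : a.*2.+1 - a = a.+1 by lia. by move/eqP; rewrite eqn_mul2l /= => /eqP.
rewrite hC eP mulnDl.
rewrite eP in h.
set Q := 'C(a.*2.+1, a.+2) in h *.
have eQ : a.+2 * Q = a * P.
  have := mul_bin_left (a.*2.+1) a.+1. rewrite eP.
  have -> : a.*2.+1 - a.+1 = a by lia. by [].
set S := 'C(b.+1.*2, b.+1) in h *.
set U := 'C(b.+1.*2, b.+2) in h *.
set V := 'C(b.+1.*2, b) in h *.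
have eU : b.+2 * U = b.+1 * S.
  have := mul_bin_left (b.+1.*2) b.+1.
  have -> : b.+1.*2 - b.+1 = b.+1 by lia. by [].
have eV : b.+1 * S = b.+2 * V.
  have := mul_bin_left (b.+1.*2) b.
  have -> : b.+1.*2 - b = b.+2 by lia. by [].
suff K : P * S <= P * U + Q * V by lia.
have E : a.+2 * b.+2 * (P*U + Q*V) = 2 * a.+1 * b.+1 * (P*S).
  nia.
have L : a.+2 * b.+2 <= 2 * a.+1 * b.+1 by nia.
rewrite -(@leq_pmul2l (a.+2 * b.+2)) // E.
by rewrite leq_mul2r L orbT.
Qed.

Theorem claim1 (x y a b : nat) :
  3 <= x -> 3 <= y -> a.*2 <= x -> b.*2 <= y ->
  ~ (x = 4 /\ y = 4 /\ a = 2 /\ b = 2) ->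
  'C(x, a) * 'C(y, b) <= 'C(x + y - 1, a + b).
Proof.
move=> hx hy ha hb hn.
case: (posnP a) => [->|a0].
  rewrite bin0 mul1n add0n; apply: leq_bin2l; lia.
case: (posnP b) => [->|b0].
  rewrite bin0 muln1 addn0; apply: leq_bin2l; lia.
case: (ltnP b.*2 y) => hb'.
  exact: lemA.
case: (ltnP a.*2 x) => ha'.
  rewrite mulnC addnC (addnC a); exact: lemA.
have ex : x = a.*2 by lia.
have ey : y = b.*2 by lia.
subst x y; apply: lemB; lia.
Qed.
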